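(* Let $N$ be an integer and $L$ a positive integer, and let $f$ be a real-valued function with two continuous derivatives on $[N+1, N+L]$. Suppose there exist real numbers $V < W$ with $W > 1$ such that $$\frac{1}{W} \leq |f''(x)| \leq \frac{1}{V} \quad \text{for all } x \in [N+1, N+L].$$ Then $$\left|\sum_{n=N+1}^{N+L} e^{2\pi i f(n)}\right| \leq \left(\frac{L-1}{V} + 1\right)\left(2\sqrt{\frac{2}{\pi}}\, W^{1/2} + 2\right) + 1.$$ *)

(* Defs.v *)
From Stdlib Require Import Reals Lra Lia.
Open Scope R_scope.

Definition Icc (a b : R) (x : R) : Prop := a <= x <= b.

(* derivative of f at x relative to the set D (one-sided at endpoints of an interval) *)
Definition has_deriv_within (D : R -> Prop) (f : R -> R) (x l : R) : Prop :=
  forall eps : R, 0 < eps -> exists delta : R, 0 < delta /\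
    forall h : R, h <> 0 -> Rabs h < delta -> D (x + h) ->
      Rabs ((f (x + h) - f x) / h - l) < eps.

Definition C2_on (a b : R) (f f1 f2 : R -> R) : Prop :=
  (forall x, Icc a b x -> has_deriv_within (Icc a b) f x (f1 x)) /\
  (forall x, Icc a b x -> has_deriv_within (Icc a b) f1 x (f2 x)) /\
  (forall x, Icc a b x -> limit1_in f2 (Icc a b) (f2 x) x).

Definition cmod (re im : R) : R := sqrt (re ^ 2 + im ^ 2).

(* | sum_{n=N+1}^{N+L} e^{2 pi i f(n)} |, written with cos/sin *)
Definition exp_sum_abs (f : R -> R) (N : Z) (L : nat) : R :=
  cmod (sum_f_R0 (fun k => cos (2 * PI * f (IZR N + 1 + INR k))) (L - 1))
       (sum_f_R0 (fun k => sin (2 * PI * f (IZR N + 1 + INR k))) (L - 1)).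

(* Main.v *)
Require Import Defs.
From Stdlib Require Import Reals Lra Lia ZArith.
From Coquelicot Require Import Coquelicot.
Open Scope R_scope.


Lemma sin_ge_xcos x : 0 <= x <= PI/2 -> x * cos x <= sin x.
Proof.
  intros [H0 H1].
  set (h := fun y => sin y - y * cos y).
  destruct (MVT_gen h 0 x (fun y => y * sin y)) as [c [Hc Hd]].
  - intros y _. unfold h. auto_derive; auto. ring.
  - intros y _. unfold h. apply derivable_continuous_pt.
    apply derivable_pt_minus. apply derivable_pt_sin.
    apply derivable_pt_mult. apply derivable_pt_id. apply derivable_pt_cos.
  - rewrite Rmin_left in Hc by lra. rewrite Rmax_right in Hc by lra.
    unfold h in Hd. rewrite sin_0, cos_0 in Hd.
    assert (0 <= sin c).
    { destruct (Req_dec c 0) as [->|]. rewrite sin_0; lra.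
      left; apply sin_gt_0; pose proof PI2_Rlt_PI; lra. }
    assert (0 <= c * sin c * (x - 0)) by (apply Rmult_le_pos; [apply Rmult_le_pos|]; lra).
    lra.
Qed.

Lemma cot_decr x y : 0 < x -> x <= y -> y < PI -> cos y / sin y <= cos x / sin x.
Proof.
  intros Hx Hxy Hy.
  assert (sx : 0 < sin x) by (apply sin_gt_0; lra).
  assert (sy : 0 < sin y) by (apply sin_gt_0; lra).
  assert (0 <= sin (y - x)).
  { destruct (Req_dec y x) as [->|]. replace (x-x) with 0 by ring; rewrite sin_0; lra.
    left; apply sin_gt_0; lra. }
  rewrite sin_minus in H.
  unfold Rdiv. apply Rmult_le_reg_r with (sin x * sin y). nra.
  replace (cos y * / sin y * (sin x * sin y)) with (cos y * sin x) by (field; lra).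
  replace (cos x * / sin x * (sin x * sin y)) with (cos x * sin y) by (field; lra).
  lra.
Qed.

Lemma trig_shift_nat (k : nat) x :
  (cos (x + INR k * PI) = cos x /\ sin (x + INR k * PI) = sin x) \/
  (cos (x + INR k * PI) = - cos x /\ sin (x + INR k * PI) = - sin x).
Proof.
  induction k.
  - left. simpl. rewrite Rmult_0_l, Rplus_0_r. auto.
  - rewrite S_INR. replace (x + (INR k + 1) * PI) with ((x + INR k * PI) + PI) by ring.
    rewrite neg_cos, neg_sin. destruct IHk as [[-> ->]|[-> ->]].
    + right; auto.
    + left; split; ring.
Qed.

Lemma trig_shift (n : Z) x : exists s, (s = 1 \/ s = -1) /\
  cos (x + IZR n * PI) = s * cos x /\ sin (x + IZR n * PI) = s * sin x.
Proof.
  destruct (Z_le_gt_dec 0 n) as [Hn|Hn].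
  - rewrite <- (Z2Nat.id n) by lia. rewrite <- INR_IZR_INZ.
    destruct (trig_shift_nat (Z.to_nat n) x) as [[-> ->]|[-> ->]].
    + exists 1; split; [left|split]; ring.
    + exists (-1); split; [right|split]; ring.
  - set (k := Z.to_nat (- n)).
    assert (E : IZR n = - INR k).
    { unfold k. rewrite INR_IZR_INZ. rewrite Z2Nat.id; [|lia]. rewrite opp_IZR. ring. }
    rewrite E.
    destruct (trig_shift_nat k (x + - INR k * PI)) as [[H1 H2]|[H1 H2]];
    replace (x + - INR k * PI + INR k * PI) with x in H1, H2 by ring.
    + exists 1. split. left; reflexivity. lra.
    + exists (-1). split. right; reflexivity. lra.
Qed.


Definition V0 (A t : R) : R :=
  if Req_EM_T t 0 then A else Rmax (-A) (Rmin A (cos (PI*t) / (2 * sin (PI*t)))).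
Definition gLt (tau t : R) := if Rle_dec t (1 - tau) then 0 else 1 - (1 - t)/tau.
Definition gRt (tau t : R) := if Rle_dec t tau then 1 - t/tau else 0.

Lemma gLt_nonneg tau t : 0 < tau -> t <= 1 -> 0 <= gLt tau t.
Proof.
  intros Ht H. unfold gLt. destruct Rle_dec. lra.
  assert ((1-t)/tau < 1). { apply Rmult_lt_reg_r with tau; auto. unfold Rdiv. rewrite Rmult_assoc, Rinv_l; lra. }
  lra.
Qed.

Lemma gRt_nonneg tau t : 0 < tau -> 0 <= t -> 0 <= gRt tau t.
Proof.
  intros Ht H. unfold gRt. destruct Rle_dec; [|lra].
  assert (t/tau <= 1). { apply Rmult_le_reg_r with tau; auto. unfold Rdiv. rewrite Rmult_assoc, Rinv_l; lra. }
  lra.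
Qed.

Lemma key_ineq A x : 0 < x <= PI/2 -> 0 < A -> cos x > 2 * A * sin x ->
  2 * A * x < 1 /\ cos x - 2 * A * sin x <= 1 - 2 * A * x.
Proof.
  intros Hx HA Hc.
  assert (Hs : 0 < sin x) by (apply sin_gt_0; pose proof PI2_Rlt_PI; lra).
  assert (Hcs := sin_ge_xcos x ltac:(lra)).
  assert (Hc0 : 0 < cos x) by nra.
  split.
  - assert (2 * A * x * cos x < cos x) by nra. nra.
  - destruct (Rle_dec x (sin x)).
    + assert (cos x <= 1) by apply COS_bound. nra.
    + assert (cos x <= 1) by apply COS_bound.
      assert (2 * A * (x - sin x) * sin x <= cos x * (x - sin x)) by nra.
      assert (cos x * (x - sin x) <= (1 - cos x) * sin x) by nra.
      assert (2 * A * (x - sin x) * sin x <= (1 - cos x) * sin x) by lra.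
      assert (2 * A * (x - sin x) <= (1 - cos x)).
      { apply Rmult_le_reg_r with (sin x); auto. }
      lra.
Qed.

Lemma ghat_t tau t : 0 < tau -> 0 <= t < 1 ->
  Rabs (cos (PI*t) - 2 * V0 (/(2*PI*tau)) t * sin (PI*t)) <= gLt tau t + gRt tau t.
Proof.
  intros Htau Ht. set (A := /(2*PI*tau)).
  assert (HA : 0 < A) by (unfold A; apply Rinv_0_lt_compat; pose proof PI_RGT_0; nra).
  assert (E2A : forall t, 2 * A * (PI * t) = t / tau).
  { intro u. unfold A. field. split; pose proof PI_RGT_0; lra. }
  pose proof (gLt_nonneg tau t Htau ltac:(lra)) as GL.
  pose proof (gRt_nonneg tau t Htau ltac:(lra)) as GR.
  unfold V0. destruct (Req_EM_T t 0) as [->|Hn0].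
  - rewrite Rmult_0_r, sin_0, cos_0, Rmult_0_r, Rminus_0_r, Rabs_R1.
    unfold gRt. destruct Rle_dec. unfold Rdiv; rewrite Rmult_0_l. lra. lra.
  - destruct (Rle_dec t (1/2)) as [Hh|Hh].
    + set (x := PI * t).
      assert (Hx : 0 < x <= PI/2) by (unfold x; pose proof PI_RGT_0; split; nra).
      assert (Hs : 0 < sin x) by (apply sin_gt_0; pose proof PI2_Rlt_PI; lra).
      assert (Hc : 0 <= cos x) by (apply cos_ge_0; lra).
      assert (Hq : 0 <= cos x / (2 * sin x)) by (apply Rdiv_le_0_compat; lra).
      destruct (Rle_dec (cos x / (2 * sin x)) A) as [HqA|HqA].
      * rewrite (Rmin_right A) by lra. rewrite Rmax_right by lra.
        replace (cos x - 2 * (cos x / (2 * sin x)) * sin x) with 0 by (field; lra).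
        rewrite Rabs_R0. lra.
      * rewrite (Rmin_left A) by lra. rewrite Rmax_right by lra.
        assert (Hgt : cos x > 2 * A * sin x).
        { apply Rnot_le_lt in HqA. apply Rmult_lt_compat_r with (r := 2 * sin x) in HqA; [|lra].
          unfold Rdiv in HqA. rewrite Rmult_assoc, Rinv_l in HqA by lra. lra. }
        destruct (key_ineq A x Hx HA Hgt) as [K1 K2].
        assert (Ex : 2 * A * x = t / tau) by (unfold x; apply E2A).
        rewrite Ex in K1, K2.
        rewrite Rabs_right by lra.
        unfold gRt. destruct Rle_dec as [|n].
        -- lra.
        -- exfalso. apply n. apply Rmult_le_reg_r with (/tau). apply Rinv_0_lt_compat; lra.
           rewrite Rinv_r by lra. unfold Rdiv in K1. lra.
    + set (y := PI * (1 - t)).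
      assert (Hy : 0 < y <= PI/2) by (unfold y; pose proof PI_RGT_0; split; nra).
      assert (Ec : cos (PI * t) = - cos y).
      { unfold y. replace (PI * (1 - t)) with (PI - PI * t) by ring. rewrite cos_minus, cos_PI, sin_PI. ring. }
      assert (Es : sin (PI * t) = sin y).
      { unfold y. replace (PI * (1 - t)) with (PI - PI * t) by ring. rewrite sin_minus, cos_PI, sin_PI. ring. }
      rewrite Ec, Es.
      assert (Hs : 0 < sin y) by (apply sin_gt_0; pose proof PI2_Rlt_PI; lra).
      assert (Hc : 0 <= cos y) by (apply cos_ge_0; lra).
      assert (Hq0 : 0 <= cos y / (2 * sin y)) by (apply Rdiv_le_0_compat; lra).
      replace (- cos y / (2 * sin y)) with (- (cos y / (2 * sin y))) by (field; lra).
      rewrite (Rmin_right A) by lra.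
      destruct (Rle_dec (cos y / (2 * sin y)) A) as [HqA|HqA].
      * rewrite Rmax_right by lra.
        replace (- cos y - 2 * - (cos y / (2 * sin y)) * sin y) with 0 by (field; lra).
        rewrite Rabs_R0. lra.
      * rewrite Rmax_left by lra.
        assert (Hgt : cos y > 2 * A * sin y).
        { apply Rnot_le_lt in HqA. apply Rmult_lt_compat_r with (r := 2 * sin y) in HqA; [|lra].
          unfold Rdiv in HqA. rewrite Rmult_assoc, Rinv_l in HqA by lra. lra. }
        destruct (key_ineq A y Hy HA Hgt) as [K1 K2].
        assert (Ey : 2 * A * y = (1 - t) / tau) by (unfold y; apply E2A).
        rewrite Ey in K1, K2.
        rewrite Rabs_left1 by lra.
        unfold gLt. destruct Rle_dec as [n|n].
        -- exfalso. assert ((1 - t) / tau * tau < 1 * tau) by (apply Rmult_lt_compat_r; lra).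
           unfold Rdiv in H. rewrite Rmult_assoc, Rinv_l in H by lra. lra.
        -- lra.
Qed.

Lemma V0_bound A t : 0 <= A -> Rabs (V0 A t) <= A.
Proof.
  intros HA. unfold V0. destruct Req_EM_T. rewrite Rabs_right; lra.
  apply Rabs_le. split. apply Rmax_l. apply Rmax_lub. lra. apply Rmin_l.
Qed.

Lemma V0_pos A t : 0 <= A -> 0 <= t <= 1/2 -> 0 <= V0 A t.
Proof.
  intros HA Ht. unfold V0. destruct Req_EM_T. lra.
  assert (Hs : 0 < sin (PI*t)) by (apply sin_gt_0; pose proof PI_RGT_0; nra).
  assert (Hc : 0 <= cos (PI*t)) by (apply cos_ge_0; pose proof PI_RGT_0; nra).
  apply Rle_trans with (Rmin A (cos (PI * t) / (2 * sin (PI * t)))); [|apply Rmax_r].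
  apply Rmin_glb. lra. apply Rdiv_le_0_compat; lra.
Qed.

Lemma V0_neg A t : 0 <= A -> 1/2 <= t < 1 -> V0 A t <= 0.
Proof.
  intros HA Ht. unfold V0. destruct Req_EM_T. lra.
  assert (Hs : 0 < sin (PI*t)) by (apply sin_gt_0; pose proof PI_RGT_0; nra).
  assert (Hc : cos (PI*t) <= 0) by (apply cos_le_0; pose proof PI_RGT_0; nra).
  apply Rmax_lub. lra.
  apply Rle_trans with (cos (PI * t) / (2 * sin (PI * t))). apply Rmin_r.
  unfold Rdiv. assert (0 < / (2 * sin (PI*t))) by (apply Rinv_0_lt_compat; lra). nra.
Qed.

Lemma V0_mono A s t : 0 <= A -> 0 <= s <= t -> t < 1 -> V0 A t <= V0 A s.
Proof.
  intros HA Hst Ht.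
  destruct (Req_EM_T s 0) as [->|Hs0].
  - unfold V0 at 2. destruct Req_EM_T; [|congruence].
    pose proof (V0_bound A t HA). apply Rabs_le_between in H. lra.
  - unfold V0. destruct (Req_EM_T t 0); [lra|]. destruct (Req_EM_T s 0); [congruence|].
    assert (Hc := cot_decr (PI*s) (PI*t) ltac:(pose proof PI_RGT_0; nra)
      ltac:(pose proof PI_RGT_0; nra) ltac:(pose proof PI_RGT_0; nra)).
    assert (Hs : 0 < sin (PI*s)) by (apply sin_gt_0; pose proof PI_RGT_0; nra).
    assert (Ht' : 0 < sin (PI*t)) by (apply sin_gt_0; pose proof PI_RGT_0; nra).
    assert (E : forall u, cos u / (2 * sin u) = / 2 * (cos u / sin u)).
    { intro u. unfold Rdiv. rewrite Rinv_mult. ring. }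
    rewrite !E.
    apply Rle_max_compat_l. apply Rle_min_compat_l. lra.
Qed.

Lemma ghat tau th : 0 < tau ->
  Rabs (cos (PI*th) - 2 * V0 (/(2*PI*tau)) (frac_part th) * sin (PI*th))
  <= gLt tau (frac_part th) + gRt tau (frac_part th).
Proof.
  intros Htau. pose proof (base_fp th) as [F1 F2].
  destruct (trig_shift (Int_part th) (PI * frac_part th)) as [s [Hs [Hc Hsn]]].
  replace (PI * frac_part th + IZR (Int_part th) * PI) with (PI * th) in Hc, Hsn
    by (unfold frac_part; ring).
  rewrite Hc, Hsn.
  replace (s * cos (PI * frac_part th) - 2 * V0 (/ (2 * PI * tau)) (frac_part th) * (s * sin (PI * frac_part th)))
    with (s * (cos (PI * frac_part th) - 2 * V0 (/ (2 * PI * tau)) (frac_part th) * sin (PI * frac_part th))) by ring.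
  rewrite Rabs_mult. replace (Rabs s) with 1 by (destruct Hs as [->| ->]; [rewrite Rabs_R1|rewrite Rabs_left; lra]; auto).
  rewrite Rmult_1_l. apply ghat_t; lra.
Qed.


Fixpoint rsum (f : nat -> R) (n : nat) : R :=
  match n with O => 0 | S m => rsum f m + f m end.

Lemma fp_decomp x : x = IZR (Int_part x) + frac_part x.
Proof. unfold frac_part. ring. Qed.

Lemma floor_cases x y : x <= y ->
  (Int_part x = Int_part y /\ frac_part y - frac_part x = y - x) \/
  IZR (Int_part y) - IZR (Int_part x) >= 1.
Proof.
  intros Hxy. pose proof (base_fp x). pose proof (base_fp y).
  pose proof (fp_decomp x). pose proof (fp_decomp y).
  destruct (Z.eq_dec (Int_part x) (Int_part y)) as [E|E].
  - left. split; auto. unfold frac_part. rewrite E. ring.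
  - right. destruct (Z_lt_le_dec (Int_part x) (Int_part y)) as [L|L].
    + assert (IZR (Int_part x) + 1 <= IZR (Int_part y)).
      { rewrite <- plus_IZR. apply IZR_le. lia. }
      lra.
    + exfalso. assert (IZR (Int_part y) + 1 <= IZR (Int_part x)).
      { rewrite <- plus_IZR. apply IZR_le. lia. }
      lra.
Qed.

Section Tents.
Variables tau h : R.
Hypothesis Htau : 0 < tau.
Hypothesis Htau1 : tau <= 1.
Hypothesis Hh : 0 < h.

Definition phiL t := if Rle_dec t (1 - tau) then 0 else (t - (1 - tau))^2 / (2*tau).
Definition PhiL x := (tau/2 + h) * IZR (Int_part x) + phiL (frac_part x).
Definition phiR t := if Rle_dec t tau then t - t^2/(2*tau) else tau/2.
Definition PhiR x := (tau/2 + h) * IZR (Int_part x) + phiR (frac_part x).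

Lemma phiL_props t : 0 <= t < 1 -> 0 <= phiL t /\ phiL t <= tau / 2 * t.
Proof.
  intros Ht. unfold phiL. destruct Rle_dec. split; nra.
  apply Rnot_le_lt in n.
  split. apply Rdiv_le_0_compat; nra.
  assert (H1 : t - (1 - tau) <= tau * t) by nra.
  assert (H2 : (t - (1 - tau))^2 <= tau * tau * t) by nra.
  apply Rmult_le_reg_r with (2*tau). lra.
  unfold Rdiv. rewrite Rmult_assoc, Rinv_l by lra. nra.
Qed.

Lemma phiL_mono s t : s <= t -> t < 1 -> phiL s <= phiL t.
Proof.
  intros Hst Ht. unfold phiL. destruct (Rle_dec s (1-tau)); destruct (Rle_dec t (1-tau)).
  lra. apply Rdiv_le_0_compat; nra. lra.
  unfold Rdiv. apply Rmult_le_compat_r. apply Rlt_le, Rinv_0_lt_compat; lra. nra.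
Qed.

Lemma PhiL_mono x y : x <= y -> PhiL x <= PhiL y.
Proof.
  intros Hxy. unfold PhiL. pose proof (base_fp x). pose proof (base_fp y).
  destruct (floor_cases x y Hxy) as [[E1 E2]|E].
  - rewrite E1. pose proof (phiL_mono (frac_part x) (frac_part y) ltac:(lra) ltac:(lra)). lra.
  - pose proof (phiL_props (frac_part x) ltac:(lra)). pose proof (phiL_props (frac_part y) ltac:(lra)).
    nra.
Qed.

Lemma PhiL_step x : h * gLt tau (frac_part x) <= PhiL (x + h) - PhiL x.
Proof.
  pose proof (base_fp x) as Fx. pose proof (base_fp (x+h)) as Fy.
  assert (G1 : gLt tau (frac_part x) <= 1).
  { unfold gLt. destruct Rle_dec. lra. assert (0 <= (1 - frac_part x)/tau) by (apply Rdiv_le_0_compat; lra). lra. }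
  unfold PhiL. destruct (floor_cases x (x+h) ltac:(lra)) as [[E1 E2]|E].
  - rewrite E1. replace (frac_part (x+h)) with (frac_part x + h) by lra.
    unfold gLt, phiL. destruct (Rle_dec (frac_part x) (1 - tau)).
    + rewrite Rmult_0_r. destruct Rle_dec. lra. ring_simplify. apply Rdiv_le_0_compat; nra.
    + destruct Rle_dec. lra.
      apply Rmult_le_reg_r with (2*tau). lra.
      unfold Rdiv. field_simplify; try lra. nra.
  - pose proof (phiL_props (frac_part x) ltac:(lra)). pose proof (phiL_props (frac_part (x+h)) ltac:(lra)).
    nra.
Qed.

Lemma PhiL_growth x y : x <= y -> PhiL y - PhiL x <= (tau/2 + h) * (y - x + 1).
Proof.
  intros Hxy. unfold PhiL. pose proof (base_fp x). pose proof (base_fp y).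
  pose proof (phiL_props (frac_part x) ltac:(lra)). pose proof (phiL_props (frac_part y) ltac:(lra)).
  pose proof (fp_decomp x). pose proof (fp_decomp y).
  nra.
Qed.

Lemma phiR_props t : 0 <= t <= 1 -> 0 <= phiR t /\ phiR t <= tau / 2 /\ tau / 2 * t <= phiR t.
Proof.
  intros Ht. unfold phiR. destruct Rle_dec.
  - assert (E : t - t^2/(2*tau) = t * (1 - t / (2*tau))) by (field; lra).
    assert (t / (2*tau) <= 1/2).
    { apply Rmult_le_reg_r with (2*tau). lra. unfold Rdiv. rewrite Rmult_assoc, Rinv_l by lra. lra. }
    assert (tau/2 - (t - t^2/(2*tau)) = (tau - t)^2/(2*tau)) by (field; lra).
    assert (0 <= (tau - t)^2/(2*tau)) by (apply Rdiv_le_0_compat; nra).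
    rewrite E. split; [nra|split]. lra.
    assert (t * (1 - t/(2*tau)) - tau/2*t = t * (1 - tau/2 - t/(2*tau))) by ring.
    assert (t / (2 * tau) <= 1/2) by auto.
    nra.
  - split; [lra|split]; nra.
Qed.

Lemma phiR_mono s t : 0 <= s -> s <= t -> phiR s <= phiR t.
Proof.
  intros Hs Hst. unfold phiR. destruct (Rle_dec s tau); destruct (Rle_dec t tau).
  - assert (t - t^2/(2*tau) - (s - s^2/(2*tau)) = (t - s) * (1 - (t + s)/(2*tau))) by (field; lra).
    assert ((t + s)/(2*tau) <= 1).
    { apply Rmult_le_reg_r with (2*tau). lra. unfold Rdiv. rewrite Rmult_assoc, Rinv_l by lra. lra. }
    nra.
  - assert (tau/2 - (s - s^2/(2*tau)) = (tau - s)^2/(2*tau)) by (field; lra).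
    assert (0 <= (tau - s)^2/(2*tau)) by (apply Rdiv_le_0_compat; nra). lra.
  - lra.
  - lra.
Qed.

Lemma PhiR_mono x y : x <= y -> PhiR x <= PhiR y.
Proof.
  intros Hxy. unfold PhiR. pose proof (base_fp x). pose proof (base_fp y).
  destruct (floor_cases x y Hxy) as [[E1 E2]|E].
  - rewrite E1. pose proof (phiR_mono (frac_part x) (frac_part y) ltac:(lra) ltac:(lra)). lra.
  - pose proof (phiR_props (frac_part x) ltac:(lra)). pose proof (phiR_props (frac_part y) ltac:(lra)).
    nra.
Qed.

Lemma PhiR_step x : h * gRt tau (frac_part x) <= PhiR x - PhiR (x - h).
Proof.
  pose proof (base_fp x) as Fx. pose proof (base_fp (x-h)) as Fy.
  assert (G1 : gRt tau (frac_part x) <= 1).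
  { unfold gRt. destruct Rle_dec; [|lra]. assert (0 <= frac_part x/tau) by (apply Rdiv_le_0_compat; lra). lra. }
  unfold PhiR. destruct (floor_cases (x-h) x ltac:(lra)) as [[E1 E2]|E].
  - rewrite E1. replace (frac_part (x-h)) with (frac_part x - h) by lra.
    unfold gRt. destruct (Rle_dec (frac_part x) tau).
    + unfold phiR. destruct (Rle_dec (frac_part x) tau); [|lra].
      destruct (Rle_dec (frac_part x - h) tau); [|lra].
      apply Rmult_le_reg_r with (2*tau). lra.
      unfold Rdiv. field_simplify; try lra. nra.
    + rewrite Rmult_0_r. pose proof (phiR_mono (frac_part x - h) (frac_part x) ltac:(lra) ltac:(lra)). lra.
  - pose proof (phiR_props (frac_part x) ltac:(lra)). pose proof (phiR_props (frac_part (x-h)) ltac:(lra)).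
    nra.
Qed.

Lemma PhiR_growth x y : x <= y -> PhiR y - PhiR x <= (tau/2 + h) * (y - x + 1).
Proof.
  intros Hxy. unfold PhiR. pose proof (base_fp x). pose proof (base_fp y).
  pose proof (phiR_props (frac_part x) ltac:(lra)). pose proof (phiR_props (frac_part y) ltac:(lra)).
  pose proof (fp_decomp x). pose proof (fp_decomp y).
  nra.
Qed.

End Tents.

Lemma telescope (g : R -> R) (Phi : R -> R) (th : nat -> R) (h : R) (n : nat) :
  (1 <= n)%nat ->
  (forall x y, x <= y -> Phi x <= Phi y) ->
  (forall x, h * g x <= Phi (x + h) - Phi x) ->
  (forall k, (k + 1 < n)%nat -> th k + h <= th (S k)) ->
  h * rsum (fun k => g (th k)) n <= Phi (th (n-1)%nat + h) - Phi (th O).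
Proof.
  intros Hn Hm Hs Hth. induction n as [|n IH]. lia.
  destruct n as [|n].
  - simpl. specialize (Hs (th O)). lra.
  - assert (IH' := IH ltac:(lia) (fun k Hk => Hth k ltac:(lia))).
    replace (S (S n) - 1)%nat with (S n) by lia.
    replace (S n - 1)%nat with n in IH' by lia.
    change (rsum (fun k => g (th k)) (S (S n))) with (rsum (fun k => g (th k)) (S n) + g (th (S n))).
    pose proof (Hs (th (S n))). pose proof (Hm _ _ (Hth n ltac:(lia))). lra.
Qed.


Definition pr (f : nat -> R * R) (n : nat) : R * R :=
  (rsum (fun k => fst (f k)) n, rsum (fun k => snd (f k)) n).
Definition nm (p : R * R) : R := sqrt (fst p ^ 2 + snd p ^ 2).
Definition padd (p q : R * R) : R * R := (fst p + fst q, snd p + snd q).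
Definition psc (r : R) (p : R * R) : R * R := (r * fst p, r * snd p).

Lemma nm_tri p q : nm (padd p q) <= nm p + nm q.
Proof. exact (Cmod_triangle p q). Qed.

Lemma nm_sc r p : nm (psc r p) = Rabs r * nm p.
Proof.
  unfold nm, psc. cbn [fst snd].
  replace ((r * fst p) ^ 2 + (r * snd p) ^ 2) with (r^2 * (fst p ^ 2 + snd p ^ 2)) by ring.
  rewrite sqrt_mult_alt. rewrite <- sqrt_Rsqr_abs. unfold Rsqr. f_equal. f_equal. ring.
  apply pow2_ge_0.
Qed.

Lemma nm_ext p q : fst p = fst q -> snd p = snd q -> nm p = nm q.
Proof. intros. unfold nm. rewrite H, H0. auto. Qed.

Lemma nm_pr f n : nm (pr f n) <= rsum (fun k => nm (f k)) n.
Proof.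
  induction n. unfold nm, pr. cbn [rsum fst snd]. replace (0^2+0^2) with 0 by ring. rewrite sqrt_0. simpl; lra.
  simpl. eapply Rle_trans; [|apply Rplus_le_compat_r; exact IHn].
  apply Rle_trans with (nm (padd (pr f n) (f n))); [right; apply nm_ext; reflexivity|].
  apply nm_tri.
Qed.

Definition Ex (x : R) : R * R := (cos (2 * PI * x), sin (2 * PI * x)).

Lemma nm_Ex x : nm (Ex x) = 1.
Proof. unfold nm, Ex. cbn [fst snd]. replace (cos (2*PI*x) ^ 2 + sin (2*PI*x) ^ 2) with 1. apply sqrt_1.
  rewrite <- (sin2_cos2 (2*PI*x)). unfold Rsqr. ring. Qed.

Section Abel.
Variable a : nat -> R.
Variable v : nat -> R.
Let e k := Ex (a k).
Definition Pt k := (((fst (e k) + fst (e (S k)))/2 - v k * (snd (e (S k)) - snd (e k))),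
                    ((snd (e k) + snd (e (S k)))/2 + v k * (fst (e (S k)) - fst (e k)))).
Definition Qf k := psc (v k) (fst (e (S k)) - fst (e k), snd (e (S k)) - snd (e k)).

Lemma rot_lemma (b ph w : R) :
  sqrt (((cos (b - ph) + cos (b + ph)) / 2 - w * (sin (b + ph) - sin (b - ph))) ^ 2 +
        ((sin (b - ph) + sin (b + ph)) / 2 + w * (cos (b + ph) - cos (b - ph))) ^ 2)
  = Rabs (cos ph - 2 * w * sin ph).
Proof.
  rewrite !cos_plus, !sin_plus, !cos_minus, !sin_minus.
  set (D := cos ph - 2 * w * sin ph).
  replace ((cos b * cos ph + sin b * sin ph + (cos b * cos ph - sin b * sin ph)) / 2 -
   w * (sin b * cos ph + cos b * sin ph - (sin b * cos ph - cos b * sin ph))) with (cos b * D) by (unfold D; field).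
  replace ((sin b * cos ph - cos b * sin ph + (sin b * cos ph + cos b * sin ph)) / 2 +
   w * (cos b * cos ph - sin b * sin ph - (cos b * cos ph + sin b * sin ph))) with (sin b * D) by (unfold D; field).
  replace ((cos b * D) ^ 2 + (sin b * D) ^ 2) with (D^2).
  rewrite <- sqrt_Rsqr_abs. unfold Rsqr. f_equal. ring.
  rewrite <- (Rmult_1_r (D^2)) at 1. rewrite <- (sin2_cos2 b). unfold Rsqr. ring.
Qed.

Lemma Pt_nm k : nm (Pt k) = Rabs (cos (PI * (a (S k) - a k)) - 2 * v k * sin (PI * (a (S k) - a k))).
Proof.
  unfold Pt, e, Ex, nm. cbn [fst snd].
  rewrite <- (rot_lemma (2 * PI * a k + PI * (a (S k) - a k)) (PI * (a (S k) - a k)) (v k)).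
  replace (2 * PI * a k + PI * (a (S k) - a k) - PI * (a (S k) - a k)) with (2 * PI * a k) by ring.
  replace (2 * PI * a k + PI * (a (S k) - a k) + PI * (a (S k) - a k)) with (2 * PI * a (S k)) by ring.
  reflexivity.
Qed.

Lemma abel_id n :
  pr e (S n) = padd (psc (1/2) (padd (e O) (e n))) (padd (pr Pt n) (snd (pr Qf n), - fst (pr Qf n))).
Proof.
  induction n.
  - unfold pr, padd, psc; simpl. f_equal; lra.
  - change (pr e (S (S n))) with (padd (pr e (S n)) (e (S n))).
    rewrite IHn. unfold pr, padd, psc, Pt, Qf, e, Ex; simpl. f_equal; field.
Qed.

Lemma abel_bound m : (1 <= m)%nat ->
  nm (padd (pr Qf m) (psc (- v (m-1)%nat) (e m)))
  <= Rabs (v O) + rsum (fun k => Rabs (v (S k) - v k)) (m-1).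
Proof.
  intros Hm. induction m. lia.
  destruct m.
  - replace (S 0 - 1)%nat with O by lia.
    assert (E : nm (padd (pr Qf 1) (psc (- v O) (e 1%nat))) = nm (psc (- v O) (e O))).
    { apply nm_ext; unfold pr, psc, padd, Qf; simpl; ring. }
    rewrite E, nm_sc. unfold e. rewrite nm_Ex, Rabs_Ropp. simpl. lra.
  - specialize (IHm ltac:(lia)). replace (S (S m) - 1)%nat with (S m) by lia.
    replace (S m - 1)%nat with m in IHm by lia.
    change (rsum (fun k => Rabs (v (S k) - v k)) (S m)) with
      (rsum (fun k => Rabs (v (S k) - v k)) m + Rabs (v (S m) - v m)).
    replace (nm (padd (pr Qf (S (S m))) (psc (- v (S m)) (e (S (S m))))))
      with (nm (padd (padd (pr Qf (S m)) (psc (- v m) (e (S m)))) (psc (- (v (S m) - v m)) (e (S m))))).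
    eapply Rle_trans; [apply nm_tri|]. rewrite nm_sc. unfold e at 2. rewrite nm_Ex, Rabs_Ropp. lra.
    apply nm_ext; unfold pr, psc, padd, Qf; simpl; ring.
Qed.

Lemma sum_bound n : (1 <= n)%nat ->
  nm (pr e (S n)) <= 1 + rsum (fun k => nm (Pt k)) n
     + (Rabs (v O) + Rabs (v (n-1)%nat) + rsum (fun k => Rabs (v (S k) - v k)) (n-1)).
Proof.
  intros Hn. rewrite abel_id. rewrite Rplus_assoc.
  eapply Rle_trans; [apply nm_tri|].
  apply Rplus_le_compat.
  { rewrite nm_sc. eapply Rle_trans. apply Rmult_le_compat_l. apply Rabs_pos. apply nm_tri.
    unfold e. rewrite !nm_Ex. rewrite Rabs_right by lra. lra. }
  eapply Rle_trans; [apply nm_tri|]. apply Rplus_le_compat. apply nm_pr.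
  replace (nm (snd (pr Qf n), - fst (pr Qf n))) with (nm (pr Qf n))
    by (unfold nm; simpl; f_equal; ring).
  pose proof (abel_bound n Hn).
  replace (pr Qf n) with (padd (padd (pr Qf n) (psc (- v (n-1)%nat) (e n))) (psc (v (n-1)%nat) (e n)))
    at 1 by (apply injective_projections; unfold padd, psc; simpl; ring).
  eapply Rle_trans; [apply nm_tri|]. rewrite nm_sc. unfold e at 2. rewrite nm_Ex. lra.
Qed.
End Abel.


Lemma rsum_le f g n : (forall k, (k < n)%nat -> f k <= g k) -> rsum f n <= rsum g n.
Proof. induction n; intros H; simpl. lra. pose proof (H n ltac:(lia)). pose proof (IHn (fun k Hk => H k ltac:(lia))). lra. Qed.

Lemma rsum_plus f g n : rsum (fun k => f k + g k) n = rsum f n + rsum g n.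
Proof. induction n; simpl. ring. rewrite IHn. ring. Qed.

Lemma rsum_scal c f n : rsum (fun k => c * f k) n = c * rsum f n.
Proof. induction n; simpl. ring. rewrite IHn. ring. Qed.

Section Var.
Variable A : R.
Hypothesis HA : 0 <= A.
Variable th : nat -> R.
Let v k := V0 A (frac_part (th k)).
Let I k := IZR (Int_part (th k)).

Lemma var_step k : th k <= th (S k) ->
  Rabs (v (S k) - v k) <= 4 * A * (I (S k) - I k) - (v (S k) - v k).
Proof.
  intros Hk. unfold v, I.
  pose proof (base_fp (th k)). pose proof (base_fp (th (S k))).
  destruct (floor_cases _ _ Hk) as [[E1 E2]|E].
  - rewrite E1. pose proof (V0_mono A (frac_part (th k)) (frac_part (th (S k))) HA ltac:(lra) ltac:(lra)).
    rewrite Rabs_left1 by lra. lra.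
  - pose proof (V0_bound A (frac_part (th k)) HA). pose proof (V0_bound A (frac_part (th (S k))) HA).
    apply Rabs_le_between in H1. apply Rabs_le_between in H2.
    destruct (Rle_dec 0 (V0 A (frac_part (th (S k))) - V0 A (frac_part (th k)))).
    + rewrite Rabs_right by lra. nra.
    + rewrite Rabs_left by lra. nra.
Qed.

Lemma var_sum m : (forall k, (k < m)%nat -> th k <= th (S k)) ->
  rsum (fun k => Rabs (v (S k) - v k)) m <= 4 * A * (I m - I O) - (v m - v O).
Proof.
  induction m; intros H; simpl. lra.
  pose proof (IHm (fun k Hk => H k ltac:(lia))). pose proof (var_step m (H m ltac:(lia))). lra.
Qed.

Lemma v_end t : 0 <= t < 1 -> Rabs (V0 A t) + V0 A t <= 4 * A * (1 - t) /\ Rabs (V0 A t) - V0 A t <= 4 * A * t.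
Proof.
  intros Ht. pose proof (V0_bound A t HA). apply Rabs_le_between in H as H'.
  destruct (Rle_dec t (1/2)).
  - pose proof (V0_pos A t HA ltac:(lra)). rewrite Rabs_right by lra. split; nra.
  - pose proof (V0_neg A t HA ltac:(lra)). rewrite Rabs_left1 by lra. split; nra.
Qed.

Lemma var_total n : (1 <= n)%nat -> (forall k, (k + 1 < n)%nat -> th k <= th (S k)) ->
  Rabs (v O) + Rabs (v (n-1)%nat) + rsum (fun k => Rabs (v (S k) - v k)) (n-1)
  <= 4 * A * (th (n-1)%nat - th O + 1).
Proof.
  intros Hn H. pose proof (var_sum (n-1) (fun k Hk => H k ltac:(lia))).
  pose proof (base_fp (th O)). pose proof (base_fp (th (n-1)%nat)).
  pose proof (v_end (frac_part (th O)) ltac:(lra)).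
  pose proof (v_end (frac_part (th (n-1)%nat)) ltac:(lra)).
  pose proof (fp_decomp (th O)) as D0. pose proof (fp_decomp (th (n-1)%nat)) as D1.
  unfold v, I in *.
  assert (E : 4 * A * (th (n - 1)%nat - th 0%nat + 1) =
    4 * A * (1 - frac_part (th O)) + 4 * A * frac_part (th (n-1)%nat)
    + 4 * A * (IZR (Int_part (th (n - 1)%nat)) - IZR (Int_part (th 0%nat)))).
  { rewrite D0 at 1. rewrite D1 at 1. ring. }
  lra.
Qed.
End Var.

Lemma tent_sum tau h th n : 0 < tau -> tau <= 1 -> 0 < h -> (1 <= n)%nat ->
  (forall k, (k + 1 < n)%nat -> th k + h <= th (S k)) ->
  h * rsum (fun k => gLt tau (frac_part (th k)) + gRt tau (frac_part (th k))) n
  <= 2 * (tau/2 + h) * (th (n-1)%nat - th O + h + 1).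
Proof.
  intros Ht Ht1 Hh Hn Hth.
  assert (HmL := telescope (fun x => gLt tau (frac_part x)) (PhiL tau h) th h n Hn
     (PhiL_mono tau h Ht Ht1 Hh) (PhiL_step tau h Ht Ht1 Hh) Hth).
  assert (HmR := telescope (fun x => gRt tau (frac_part x)) (fun x => PhiR tau h (x - h)) th h n Hn
     (fun x y Hxy => PhiR_mono tau h Ht Ht1 Hh (x - h) (y - h) ltac:(lra))
     (fun x => ltac:(cbv beta; replace (x + h - h) with x by ring; apply (PhiR_step tau h Ht Ht1 Hh x))) Hth).
  simpl in HmL, HmR.
  assert (Hmono : forall k, (k < n)%nat -> th O <= th k).
  { induction k; intros Hk. lra. pose proof (IHk ltac:(lia)). pose proof (Hth k ltac:(lia)). lra. }
  pose proof (Hmono (n-1)%nat ltac:(lia)).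
  pose proof (PhiL_growth tau h Ht Ht1 Hh (th O) (th (n-1)%nat + h) ltac:(lra)).
  pose proof (PhiR_growth tau h Ht Ht1 Hh (th O - h) (th (n-1)%nat + h - h) ltac:(lra)).
  rewrite rsum_plus. lra.
Qed.


Lemma discrete (a : nat -> R) (n : nat) (V W : R) :
  (1 <= n)%nat -> 0 < V -> V < W -> 1 < W ->
  (forall k, (k + 1 < n)%nat -> 1/W <= a (S (S k)) - 2 * a (S k) + a k <= 1/V) ->
  nm (pr (fun k => Ex (a k)) (S n)) <= (INR n / V + 1) * (2 * sqrt (2 / PI) * sqrt W + 2) + 1.
Proof.
  intros Hn HV HVW HW Hd.
  set (th := fun k => a (S k) - a k).
  assert (Hth : forall k, (k + 1 < n)%nat -> 1/W <= th (S k) - th k <= 1/V).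
  { intros k Hk. unfold th. specialize (Hd k Hk). lra. }
  pose proof PI_RGT_0 as Hpi. pose proof PI2_3_2 as Hpi3.
  set (s := sqrt (2 / PI)). set (r := sqrt W).
  assert (Hs2 : s * s = 2 / PI) by (apply sqrt_sqrt; apply Rlt_le, Rdiv_lt_0_compat; lra).
  assert (Hr2 : r * r = W) by (apply sqrt_sqrt; lra).
  assert (Hs : 0 < s) by (apply sqrt_lt_R0, Rdiv_lt_0_compat; lra).
  assert (Hr : 0 < r) by (apply sqrt_lt_R0; lra).
  set (tau := s / r). set (h := / W). set (A := / (2 * PI * tau)).
  assert (Htau : 0 < tau) by (apply Rdiv_lt_0_compat; lra).
  assert (Htau1 : tau <= 1).
  { assert (tau * tau <= 1).
    { unfold tau. replace (s / r * (s / r)) with ((s * s) / (r * r)) by (field; lra).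
      rewrite Hs2, Hr2. apply Rmult_le_reg_r with (PI * W). nra.
      field_simplify; nra. }
    nra. }
  assert (Hh : 0 < h) by (apply Rinv_0_lt_compat; lra).
  assert (HA : 0 < A) by (apply Rinv_0_lt_compat; nra).
  assert (Hkey : tau * W + 4 * A = 2 * s * r).
  { assert (E1 : tau * W = s * r) by (unfold tau; rewrite <- Hr2; field; lra).
    assert (E3 : 4 * A = s * r).
    { unfold A, tau. replace (4 * / (2 * PI * (s / r))) with (r * (2 / PI) / s) by (field; repeat split; lra).
      rewrite <- Hs2. field. lra. }
    lra. }
  pose proof (sum_bound a (fun k => V0 A (frac_part (th k))) n Hn) as SB.
  assert (HP : rsum (fun k => nm (Pt a (fun k => V0 A (frac_part (th k))) k)) n <=
               rsum (fun k => gLt tau (frac_part (th k)) + gRt tau (frac_part (th k))) n).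
  { apply rsum_le. intros k Hk. rewrite Pt_nm. unfold A. apply (ghat tau (th k) Htau). }
  assert (Hstep : forall k, (k + 1 < n)%nat -> th k + h <= th (S k)).
  { intros k Hk. pose proof (Hth k Hk). unfold h. unfold Rdiv in H. lra. }
  pose proof (tent_sum tau h th n Htau Htau1 Hh Hn Hstep) as TS.
  pose proof (var_total A (Rlt_le _ _ HA) th n Hn
    (fun k Hk => ltac:(pose proof (Hstep k Hk); lra))) as VT.
  assert (HR : th (n-1)%nat - th O <= INR (n-1) / V).
  { assert (forall m, (m < n)%nat -> th m - th O <= INR m / V).
    { induction m; intros Hm. simpl. unfold Rdiv. lra.
      pose proof (IHm ltac:(lia)). pose proof (Hth m ltac:(lia)).
      rewrite S_INR. unfold Rdiv in *. lra. }
    apply H; lia. }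
  rewrite minus_INR in HR by lia. simpl INR in HR at 2.
  assert (HhV : h <= 1 / V).
  { unfold h. unfold Rdiv. rewrite Rmult_1_l. apply Rlt_le, Rinv_lt_contravar; nra. }
  set (R0 := th (n-1)%nat - th O) in *.
  set (Sg := rsum (fun k => gLt tau (frac_part (th k)) + gRt tau (frac_part (th k))) n) in *.
  assert (HSg : Sg <= (tau * W + 2) * (R0 + h + 1)).
  { apply Rmult_le_reg_l with h. lra.
    replace (h * ((tau * W + 2) * (R0 + h + 1))) with (2 * (tau/2 + h) * (R0 + h + 1)).
    lra. unfold h. field. lra. }
  assert (HRh : R0 + h <= INR n / V).
  { unfold Rdiv in *. lra. }
  assert (0 <= R0).
  { unfold R0. destruct (Nat.eq_dec n 1) as [->|]. simpl; lra.
    assert (forall m, (m < n)%nat -> th O <= th m).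
    { induction m; intros Hm. lra. pose proof (IHm ltac:(lia)). pose proof (Hstep m ltac:(lia)). lra. }
    pose proof (H (n-1)%nat ltac:(lia)). lra. }
  rewrite <- Hkey.
  assert (Hfin : 1 + Sg + 4 * A * (R0 + 1) <= (INR n / V + 1) * (tau * W + 4 * A + 2) + 1).
  { apply Rle_trans with (1 + (tau * W + 4 * A + 2) * (R0 + h + 1)).
    - assert (0 <= 4 * A * h) by nra. nra.
    - assert (0 <= tau * W + 4 * A + 2) by nra. nra. }
  lra.
Qed.


Definition clamp (A B z : R) := Rmax A (Rmin B z).

Lemma clamp_in A B z : A <= B -> A <= clamp A B z <= B.
Proof. intros. unfold clamp. split. apply Rmax_l. apply Rmax_lub. lra. apply Rmin_l. Qed.

Lemma clamp_id A B z : A <= z <= B -> clamp A B z = z.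
Proof. intros. unfold clamp. rewrite Rmin_right by lra. rewrite Rmax_right by lra. auto. Qed.

Lemma clamp_dist A B z c : A <= c <= B -> Rabs (clamp A B z - c) <= Rabs (z - c).
Proof.
  intros Hc. unfold clamp.
  destruct (Rle_dec z B); [rewrite Rmin_right by lra|rewrite Rmin_left by lra];
  (destruct (Rle_dec A z); [rewrite Rmax_right by lra|rewrite Rmax_left by lra]);
  unfold Rabs; repeat destruct Rcase_abs; lra.
Qed.

Lemma clamp_is_derive A B g l z : A < z < B -> has_deriv_within (Icc A B) g z l ->
  is_derive (fun u => g (clamp A B u)) z l.
Proof.
  intros Hz H. apply is_derive_Reals. intros eps Heps.
  destruct (H eps Heps) as [d [Hd Hh]].
  assert (Hp : 0 < Rmin d (Rmin (z - A) (B - z))) by (repeat apply Rmin_pos; lra).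
  exists (mkposreal _ Hp). intros h Hh0 Hlt. simpl in Hlt.
  pose proof (Rmin_l d (Rmin (z - A) (B - z))). pose proof (Rmin_r d (Rmin (z - A) (B - z))).
  pose proof (Rmin_l (z - A) (B - z)). pose proof (Rmin_r (z - A) (B - z)).
  apply Rabs_def2 in Hlt as [Hl1 Hl2].
  rewrite (clamp_id A B (z + h)) by lra. rewrite (clamp_id A B z) by lra.
  apply Hh; auto. apply Rabs_def1; lra. unfold Icc; lra.
Qed.

Lemma within_lip A B g l c : has_deriv_within (Icc A B) g c l ->
  exists d, 0 < d /\ forall u, Icc A B u -> Rabs (u - c) < d -> Rabs (g u - g c) <= (Rabs l + 1) * Rabs (u - c).
Proof.
  intros H. destruct (H 1 Rlt_0_1) as [d [Hd Hh]]. exists d. split; auto.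
  intros u Hu Hud. destruct (Req_dec u c) as [->|Hne].
  - replace (c - c) with 0 by ring. rewrite Rminus_diag, Rabs_R0. lra.
  - specialize (Hh (u - c) ltac:(lra) Hud ltac:(replace (c + (u - c)) with u by ring; auto)).
    replace (c + (u - c)) with u in Hh by ring.
    assert (Hq : Rabs ((g u - g c) / (u - c)) < Rabs l + 1).
    { pose proof (Rabs_triang_inv ((g u - g c) / (u - c)) l). lra. }
    replace (g u - g c) with ((g u - g c) / (u - c) * (u - c)) by (field; lra).
    rewrite Rabs_mult. apply Rmult_le_compat_r. apply Rabs_pos. lra.
Qed.

Lemma clamp_cont A B g l c : A <= B -> A <= c <= B -> has_deriv_within (Icc A B) g c l ->
  continuity_pt (fun u => g (clamp A B u)) c.
Proof.
  intros HAB Hc H. destruct (within_lip A B g l c H) as [d [Hd Hl]].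
  unfold continuity_pt, continue_in, limit1_in, limit_in. intros eps Heps.
  assert (Hp : 0 < Rmin d (eps / (Rabs l + 1))).
  { apply Rmin_pos; auto. apply Rdiv_lt_0_compat; auto. pose proof (Rabs_pos l); lra. }
  exists (Rmin d (eps / (Rabs l + 1))). split; auto.
  intros y [_ Hy]. simpl in *. unfold R_dist in *.
  rewrite (clamp_id A B c) by lra.
  pose proof (clamp_dist A B y c Hc). pose proof (clamp_in A B y HAB).
  pose proof (Rmin_l d (eps / (Rabs l + 1))). pose proof (Rmin_r d (eps / (Rabs l + 1))).
  specialize (Hl (clamp A B y) ltac:(unfold Icc; lra) ltac:(lra)).
  assert (Hla : 0 < Rabs l + 1) by (pose proof (Rabs_pos l); lra).
  assert ((Rabs l + 1) * Rabs (clamp A B y - c) < eps).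
  { apply Rle_lt_trans with ((Rabs l + 1) * Rabs (y - c)). apply Rmult_le_compat_l; lra.
    replace eps with ((Rabs l + 1) * (eps / (Rabs l + 1))) by (field; lra).
    apply Rmult_lt_compat_l; lra. }
  lra.
Qed.

Lemma incr_bound A B g g' m M x y : A <= x -> x <= y -> y <= B ->
  (forall z, Icc A B z -> has_deriv_within (Icc A B) g z (g' z)) ->
  (forall z, x <= z <= y -> m <= g' z <= M) ->
  m * (y - x) <= g y - g x <= M * (y - x).
Proof.
  intros Hx Hxy Hy Hd Hb.
  destruct (Req_dec x y) as [<-|Hne]. { rewrite !Rminus_diag. lra. }
  destruct (MVT_gen (fun u => g (clamp A B u)) x y g') as [c [Hc Hm]].
  - intros z Hz. rewrite Rmin_left, Rmax_right in Hz by lra.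
    apply clamp_is_derive. lra. apply Hd. unfold Icc; lra.
  - intros z Hz. rewrite Rmin_left, Rmax_right in Hz by lra.
    apply clamp_cont with (g' z). lra. lra. apply Hd. unfold Icc; lra.
  - rewrite Rmin_left, Rmax_right in Hc by lra.
    rewrite !clamp_id in Hm by lra. rewrite Hm.
    specialize (Hb c Hc). split; apply Rmult_le_compat_r; lra.
Qed.

Lemma shift_diff_deriv A B f f1 x t : A <= x -> x + 2 <= B ->
  (forall z, Icc A B z -> has_deriv_within (Icc A B) f z (f1 z)) -> Icc x (x+1) t ->
  has_deriv_within (Icc x (x+1)) (fun u => f (u+1) - f u) t (f1 (t+1) - f1 t).
Proof.
  intros Hx HB Hd Ht. unfold Icc in Ht.
  intros eps Heps.
  destruct (Hd (t+1) ltac:(unfold Icc; lra) (eps/2) ltac:(lra)) as [d1 [Hd1 H1]].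
  destruct (Hd t ltac:(unfold Icc; lra) (eps/2) ltac:(lra)) as [d2 [Hd2 H2]].
  exists (Rmin d1 d2). split. apply Rmin_pos; auto.
  intros h Hh0 Hh HD. unfold Icc in HD.
  pose proof (Rmin_l d1 d2). pose proof (Rmin_r d1 d2).
  specialize (H1 h Hh0 ltac:(lra) ltac:(unfold Icc; lra)).
  specialize (H2 h Hh0 ltac:(lra) ltac:(unfold Icc; lra)).
  replace (t + h + 1) with (t + 1 + h) by ring.
  replace ((f (t + 1 + h) - f (t + h) - (f (t + 1) - f t)) / h - (f1 (t + 1) - f1 t))
    with (((f (t + 1 + h) - f (t + 1)) / h - f1 (t + 1)) - ((f (t + h) - f t) / h - f1 t)) by (field; lra).
  eapply Rle_lt_trans. apply Rabs_triang. rewrite Rabs_Ropp. lra.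
Qed.

Lemma second_diff A B f f1 f2 m M x : A <= x -> x + 2 <= B ->
  (forall z, Icc A B z -> has_deriv_within (Icc A B) f z (f1 z)) ->
  (forall z, Icc A B z -> has_deriv_within (Icc A B) f1 z (f2 z)) ->
  (forall z, Icc A B z -> m <= f2 z <= M) ->
  m <= f (x+2) - 2 * f (x+1) + f x <= M.
Proof.
  intros Hx HB Hd1 Hd2 Hb.
  assert (Hg : forall t, x <= t <= x + 1 -> m <= f1 (t+1) - f1 t <= M).
  { intros t Ht. pose proof (incr_bound A B f1 f2 m M t (t+1) ltac:(lra) ltac:(lra) ltac:(lra) Hd2
      (fun z Hz => Hb z ltac:(unfold Icc; lra))). lra. }
  pose proof (incr_bound x (x+1) (fun u => f (u+1) - f u) (fun t => f1 (t+1) - f1 t) m M x (x+1)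
    ltac:(lra) ltac:(lra) ltac:(lra) (fun t Ht => shift_diff_deriv A B f f1 x t Hx HB Hd1 Ht) Hg).
  simpl in H. replace (x + 1 + 1) with (x + 2) in H by ring. lra.
Qed.

Lemma clamp_cont2 A B g c : A <= B -> A <= c <= B -> limit1_in g (Icc A B) (g c) c ->
  continuity_pt (fun u => g (clamp A B u)) c.
Proof.
  intros HAB Hc H.
  unfold continuity_pt, continue_in, limit1_in, limit_in in *. intros eps Heps.
  destruct (H eps Heps) as [d [Hd Hh]]. exists d. split; auto.
  intros y [_ Hy]. simpl in *. unfold R_dist in *.
  rewrite (clamp_id A B c) by lra.
  pose proof (clamp_dist A B y c Hc). pose proof (clamp_in A B y HAB).
  destruct (Req_dec (clamp A B y) c) as [->|Hne]. rewrite Rminus_diag, Rabs_R0. auto.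
  apply Hh. split. unfold Icc; lra. lra.
Qed.

Lemma sign_const A B g : A <= B ->
  (forall x, Icc A B x -> limit1_in g (Icc A B) (g x) x) ->
  (forall x, Icc A B x -> g x <> 0) ->
  (forall x, Icc A B x -> 0 < g x) \/ (forall x, Icc A B x -> g x < 0).
Proof.
  intros HAB Hc Hnz.
  assert (Hct : forall x, A <= x <= B -> continuity_pt (fun u => g (clamp A B u)) x).
  { intros x Hx. apply clamp_cont2; auto. }
  assert (Key : forall x y, Icc A B x -> Icc A B y -> 0 < g x -> g y < 0 -> False).
  { intros x y Hx Hy Hgx Hgy. unfold Icc in *.
    destruct (Rtotal_order x y) as [Hlt|[Heq|Hgt]].
    - destruct (Ranalysis5.IVT_interv (fun u => - g (clamp A B u)) x y) as [z [Hz Hz0]].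
      + intros a Ha. apply continuity_pt_opp. apply Hct. lra.
      + auto.
      + rewrite clamp_id by lra. lra.
      + rewrite clamp_id by lra. lra.
      + rewrite clamp_id in Hz0 by lra. apply (Hnz z). unfold Icc; lra. lra.
    - subst. lra.
    - destruct (Ranalysis5.IVT_interv (fun u => g (clamp A B u)) y x) as [z [Hz Hz0]].
      + intros a Ha. apply Hct. lra.
      + auto.
      + rewrite clamp_id by lra. lra.
      + rewrite clamp_id by lra. lra.
      + rewrite clamp_id in Hz0 by lra. apply (Hnz z). unfold Icc; lra. lra. }
  assert (HA : Icc A B A) by (unfold Icc; lra).
  destruct (Rtotal_order (g A) 0) as [Hn|[Hz|Hp]].
  - right. intros x Hx. destruct (Rtotal_order (g x) 0) as [H1|[H1|H1]]; auto.
    + exfalso; apply (Hnz x Hx); auto.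
    + exfalso; exact (Key x A Hx HA H1 Hn).
  - exfalso; apply (Hnz A HA); auto.
  - left. intros x Hx. destruct (Rtotal_order (g x) 0) as [H1|[H1|H1]]; auto.
    + exfalso; exact (Key A x HA Hx Hp H1).
    + exfalso; apply (Hnz x Hx); auto.
Qed.


Lemma rsum_sum g n : rsum g (S n) = sum_f_R0 g n.
Proof. induction n. simpl. ring. change (rsum g (S (S n))) with (rsum g (S n) + g (S n)). rewrite IHn. simpl. ring. Qed.

Lemma nm_neg (a : nat -> R) m : nm (pr (fun k => Ex (- a k)) m) = nm (pr (fun k => Ex (a k)) m).
Proof.
  unfold nm, pr, Ex. cbn [fst snd].
  assert (E1 : rsum (fun k => cos (2 * PI * - a k)) m = rsum (fun k => cos (2 * PI * a k)) m).
  { induction m; simpl; auto. rewrite IHm. f_equal. replace (2 * PI * - a m) with (- (2 * PI * a m)) by ring. apply cos_neg. }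
  assert (E2 : rsum (fun k => sin (2 * PI * - a k)) m = - rsum (fun k => sin (2 * PI * a k)) m).
  { clear E1. induction m; simpl. ring. rewrite IHm. replace (2 * PI * - a m) with (- (2 * PI * a m)) by ring. rewrite sin_neg. ring. }
  rewrite E1, E2. f_equal. ring.
Qed.

Theorem lemma1 (N : Z) (L : nat) (f f1 f2 : R -> R) (V W : R) :
  (0 < L)%nat ->
  C2_on (IZR N + 1) (IZR N + INR L) f f1 f2 ->
  V < W -> 1 < W ->
  (forall x, IZR N + 1 <= x <= IZR N + INR L ->
     1 / W <= Rabs (f2 x) <= 1 / V) ->
  exp_sum_abs f N L <=
    ((INR L - 1) / V + 1) * (2 * sqrt (2 / PI) * sqrt W + 2) + 1.
Proof.
  intros HL [Hd1 [Hd2 Hc]] HVW HW Hb.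
  assert (HLr : 1 <= INR L) by (apply (le_INR 1); lia).
  assert (Hsq : 0 <= 2 * sqrt (2 / PI) * sqrt W) by (pose proof (sqrt_pos (2/PI)); pose proof (sqrt_pos W); nra).
  set (a := fun k => f (IZR N + 1 + INR k)).
  assert (Hexp : exp_sum_abs f N L = nm (pr (fun k => Ex (a k)) L)).
  { destruct L as [|n]. lia. unfold exp_sum_abs, cmod, nm, pr, Ex. cbn [fst snd].
    replace (S n - 1)%nat with n by lia. rewrite !rsum_sum. reflexivity. }
  rewrite Hexp.
  assert (HW0 : 0 < 1 / W) by (apply Rdiv_lt_0_compat; lra).
  assert (HV : 0 < V).
  { pose proof (Hb (IZR N + 1) ltac:(lra)) as [H1 H2].
    destruct (Rtotal_order V 0) as [Hv|[Hv|Hv]]; auto.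
    - exfalso. assert (1 / V < 0) by (unfold Rdiv; rewrite Rmult_1_l; apply Rinv_lt_0_compat; auto). pose proof (Rabs_pos (f2 (IZR N + 1))). lra.
    - exfalso. subst. unfold Rdiv in H2. rewrite Rinv_0, Rmult_0_r in H2. pose proof (Rabs_pos (f2 (IZR N + 1))). lra. }
  destruct (Nat.eq_dec L 1) as [->|HL2].
  - replace (nm (pr (fun k => Ex (a k)) 1)) with (nm (Ex (a O))) by (apply nm_ext; unfold pr; simpl; ring).
    rewrite nm_Ex. simpl INR. replace (1 - 1) with 0 by ring. unfold Rdiv. rewrite Rmult_0_l. lra.
  - set (n := (L - 1)%nat).
    assert (Hn : (1 <= n)%nat) by (unfold n; lia).
    replace L with (S n) by (unfold n; lia).
    replace (INR (S n) - 1) with (INR n) by (rewrite S_INR; ring).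
    set (A := IZR N + 1). set (B := IZR N + INR L).
    assert (HAB : A <= B) by (unfold A, B; lra).
    assert (Hnz : forall x, Icc A B x -> f2 x <> 0).
    { intros x Hx Hz. unfold Icc, A, B in Hx. pose proof (Hb x Hx) as [H1 _]. rewrite Hz, Rabs_R0 in H1. lra. }
    assert (Hsd : forall m M, (forall z, Icc A B z -> m <= f2 z <= M) ->
       forall k, (k + 1 < n)%nat -> m <= a (S (S k)) - 2 * a (S k) + a k <= M).
    { intros m M Hm k Hk.
      assert (Hk3 : INR k + 3 <= INR L).
      { replace 3 with (INR 3) by (simpl; ring). rewrite <- plus_INR. apply le_INR. unfold n in Hk. lia. }
      pose proof (pos_INR k).
      pose proof (second_diff A B f f1 f2 m M (IZR N + 1 + INR k) ltac:(unfold A; lra)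
        ltac:(unfold B; lra) Hd1 Hd2 Hm) as Hs.
      unfold a. rewrite !S_INR.
      replace (IZR N + 1 + (INR k + 1 + 1)) with (IZR N + 1 + INR k + 2) by ring.
      replace (IZR N + 1 + (INR k + 1)) with (IZR N + 1 + INR k + 1) by ring. exact Hs. }
    destruct (sign_const A B f2 HAB Hc Hnz) as [Hp|Hm].
    + apply discrete; auto.
      apply Hsd. intros z Hz. pose proof (Hb z Hz) as Hbz. rewrite Rabs_right in Hbz by (pose proof (Hp z Hz); lra). auto.
    + rewrite <- nm_neg. apply discrete; auto.
      intros k Hk. assert (Hs := Hsd (- (1/V)) (- (1/W))).
      assert (Hs' : forall z, Icc A B z -> - (1/V) <= f2 z <= - (1/W)).
      { intros z Hz. pose proof (Hb z Hz) as Hbz. rewrite Rabs_left in Hbz by (apply Hm; auto). lra. }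
      specialize (Hs Hs' k Hk). lra.
Qed.
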